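(* Let $\beta>0$ be a constant and let $x_{1:n}\in\mathcal X^n$ ($n\ge 1$) be any sequence, with used alphabet $\mathcal A$ of size $m$ and counts $n_j$. Then the redundancy of $S^\beta$ satisfies the exact identity $$R^\beta_S(x_{1:n}) = \mathrm{CL}_w(\mathcal A) - m\ln\beta + \sum_{j\in\mathcal A}\ln\frac{n_j^{n_j}}{\Gamma(n_j)} + \ln\frac{\Gamma(n+\beta)}{n^n\,\Gamma(\beta)},$$ and the upper bound $R^\beta_S(x_{1:n})\le \overline R^\beta_S$, where $$\overline R^\beta_S := \mathrm{CL}_w(\mathcal A) - m\ln\beta + \sum_{j\in\mathcal A}\tfrac12\ln\frac{n_j}{2\pi} + n\ln\Big(1+\frac{\beta}{n}\Big) + \Big(\beta-\tfrac12\Big)\ln\Big(\frac{n}{\beta}+1\Big) + \big(1-\ln\sqrt{2\pi}\big).$$ If moreover $\beta\ge 1$, then also $R^\beta_S(x_{1:n})\ge \overline R^\beta_S - (1-\ln\sqrt{2\pi})(m+2)$.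
   Context: Let $\mathcal X$ be a finite base alphabet with $D=|\mathcal X|$. For a sequence $x_{1:n}=(x_1,\dots,x_n)\in\mathcal X^n$, let $n_i$ be the number of occurrences of $i$ in $x_{1:n}$, $\mathcal A=\{x_1,\dots,x_n\}$ the set of used symbols and $m=|\mathcal A|$. For $0\le t\le n$ let $\mathcal A_t=\{x_1,\dots,x_t\}$ ($\mathcal A_0=\emptyset$), $m_t=|\mathcal A_t|$, and $n^t_i$ the number of occurrences of $i$ in $x_{1:t}$. New-symbol weights: for each $t$ and each $i\in\mathcal X\setminus\mathcal A_t$ a number $w^t_i>0$ with $\sum_{k\in\mathcal X\setminus\mathcal A_t}w^t_k\le 1$. For a constant $\beta>0$ the model $S^\beta$ is defined by $S^\beta(x_{t+1}=i\mid x_{1:t})=n^t_i/(t+\beta)$ if $n^t_i>0$ and $=\beta w^t_i/(t+\beta)$ if $n^t_i=0$ ($t=0,\dots,n-1$), and $S^\beta(x_{1:n})=\prod_{t=0}^{n-1}S^\beta(x_{t+1}\mid x_{1:t})$. Define $\mathrm{CL}_w(\mathcal A):=\sum_{t\in\{0,\dots,n-1\}:\,x_{t+1}\notin\mathcal A_t}\ln(1/w^t_{x_{t+1}})$. The redundancy of a (sub)probability $Q$ on sequences relative to the i.i.d. class is $R_Q(x_{1:n}) := \ln\frac{\max_{\theta}\prod_{t=1}^n\theta_{x_t}}{Q(x_{1:n})} = \ln\frac{n^{-n}\prod_{j\in\mathcal A}n_j^{n_j}}{Q(x_{1:n})}$, the max over probability vectors $\theta$ on $\mathcal X$; $R^\beta_S:=R_{S^\beta}$.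 All logarithms are natural. *)

(* Defs.v *)
From Stdlib Require Import Arith Reals Lra Lia ClassicalEpsilon List.
Open Scope R_scope.

Fixpoint rsum (k : nat) (f : nat -> R) : R :=
  match k with O => 0 | S k' => rsum k' f + f k' end.
Fixpoint rprod (k : nat) (f : nat -> R) : R :=
  match k with O => 1 | S k' => rprod k' f * f k' end.

(** Euler's Gamma function, defined (for x > 0) as the limit of Gauss'
    product  k! k^x / (x (x+1) ... (x+k)). *)
Definition gauss_seq (x : R) (k : nat) : R :=
  INR (Factorial.fact k) * Rpower (INR k) x / rprod (S k) (fun i => x + INR i).
Definition Gamma (x : R) : R :=
  epsilon (inhabits 0) (fun g => Un_cv (gauss_seq x) g).

(** The alphabet is {0, ..., D-1}; a sequence x_{1:n} is encoded as
    x : nat -> nat, with x_{t+1} = x t for t = 0..n-1. *)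

Fixpoint cnt (x : nat -> nat) (t i : nat) : nat :=
  match t with
  | O => O
  | S t' => (cnt x t' i + (if Nat.eqb (x t') i then 1 else 0))%nat
  end.

Definition sumA (D n : nat) (x : nat -> nat) (f : nat -> R) : R :=
  rsum D (fun j => if Nat.ltb 0 (cnt x n j) then f j else 0).
Definition prodA (D n : nat) (x : nat -> nat) (f : nat -> R) : R :=
  rprod D (fun j => if Nat.ltb 0 (cnt x n j) then f j else 1).

Definition msize (D n : nat) (x : nat -> nat) : nat :=
  length (List.filter (fun j => Nat.ltb 0 (cnt x n j)) (List.seq 0 D)).

Definition Scond (beta : R) (w : nat -> nat -> R) (x : nat -> nat) (t : nat) : R :=
  if Nat.ltb 0 (cnt x t (x t))
  then INR (cnt x t (x t)) / (INR t + beta)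
  else beta * w t (x t) / (INR t + beta).

Definition Sbeta (beta : R) (w : nat -> nat -> R) (x : nat -> nat) (n : nat) : R :=
  rprod n (Scond beta w x).

Definition CLw (w : nat -> nat -> R) (x : nat -> nat) (n : nat) : R :=
  rsum n (fun t => if Nat.eqb (cnt x t (x t)) 0 then ln (/ w t (x t)) else 0).

Definition redundancy (D n : nat) (x : nat -> nat) (Q : R) : R :=
  ln (/ (INR n ^ n) * prodA D n x (fun j => INR (cnt x n j) ^ (cnt x n j)) / Q).

Definition RS (D : nat) (beta : R) (w : nat -> nat -> R) (x : nat -> nat) (n : nat) : R :=
  redundancy D n x (Sbeta beta w x n).

Definition RSbar (D : nat) (beta : R) (w : nat -> nat -> R) (x : nat -> nat) (n : nat) : R :=
  CLw w x n - INR (msize D n x) * ln beta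
  + sumA D n x (fun j => / 2 * ln (INR (cnt x n j) / (2 * PI)))
  + INR n * ln (1 + beta / INR n)
  + (beta - / 2) * ln (INR n / beta + 1)
  + (1 - ln (sqrt (2 * PI))).

Definition weights_ok (D n : nat) (x : nat -> nat) (w : nat -> nat -> R) : Prop :=
  forall t, (t <= n)%nat ->
    (forall i, (i < D)%nat -> cnt x t i = O -> 0 < w t i) /\
    rsum D (fun i => if Nat.eqb (cnt x t i) 0 then w t i else 0) <= 1.

(* Main.v *)
Require Import Defs.
From Stdlib Require Import Reals Lra Lia List ClassicalEpsilon Factorial.
From Coquelicot Require Import Coquelicot.
Open Scope R_scope.

Lemma mono_le (f f' : R -> R) a b : a <= b ->
  (forall c, a <= c <= b -> is_derive f c (f' c)) ->
  (forall c, a <= c <= b -> 0 <= f' c) -> f a <= f b.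
Proof.
  intros Hab Hd Hp. destruct (Rle_lt_or_eq_dec _ _ Hab) as [H|H].
  - destruct (MVT_cor2 f f' a b H) as [c [Hc1 Hc2]].
    + intros c Hc. apply is_derive_Reals. auto.
    + assert (0 <= f' c) by (apply Hp; lra). nra.
  - subst; lra.
Qed.

Lemma ln_le' x y : 0 < x -> x <= y -> ln x <= ln y.
Proof.
  intros Hx Hxy. destruct (Rle_lt_or_eq_dec _ _ Hxy) as [H|H].
  - left; apply ln_increasing; auto.
  - subst; lra.
Qed.

Lemma ln_div' x y : 0 < x -> 0 < y -> ln (x / y) = ln x - ln y.
Proof.
  intros; unfold Rdiv; rewrite ln_mult, ln_Rinv; try lra.
  apply Rinv_0_lt_compat; auto.
Qed.

Lemma ln_le_sub1 z : -1 < z -> ln (1 + z) <= z.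
Proof.
  intros Hz. rewrite <- (ln_exp z) at 2. apply ln_le'; [lra|].
  apply exp_ineq1_le.
Qed.

Lemma Lu_lower u : 0 <= u < 1 -> 2 * u <= ln (1 + u) - ln (1 - u).
Proof.
  intros Hu.
  set (f := fun v => ln (1 + v) - ln (1 - v) - 2 * v).
  assert (f 0 <= f u).
  { apply (mono_le f (fun v => / (1 + v) + / (1 - v) - 2)); [lra| |].
    - intros c Hc. unfold f. auto_derive; [repeat split; lra|]. field; lra.
    - intros c Hc.
      assert (E : / (1 + c) + / (1 - c) - 2 = 2 * c * c / ((1 + c) * (1 - c))) by (field; lra).
      rewrite E. apply Rmult_le_pos; [nra|]. left; apply Rinv_0_lt_compat; nra. }
  unfold f in H. rewrite Rplus_0_r, Rminus_0_r, ln_1 in H. lra.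
Qed.

Lemma Lu_upper u : 0 <= u < 1 -> ln (1 + u) - ln (1 - u) <= 2 * u / (1 - u * u).
Proof.
  intros Hu.
  set (f := fun v => 2 * v / (1 - v * v) - (ln (1 + v) - ln (1 - v))).
  assert (f 0 <= f u).
  { apply (mono_le f (fun v => 4 * (v * v) / ((1 - v * v) * (1 - v * v)))); [lra| |].
    - intros c Hc. assert (0 < 1 - c * c) by nra. unfold f. auto_derive.
      + repeat split; try lra. 
      + field; lra.
    - intros c Hc. assert (0 < 1 - c * c) by nra. apply Rmult_le_pos; [nra|].
      left; apply Rinv_0_lt_compat; nra. }
  unfold f in H. rewrite Rplus_0_r, Rminus_0_r, ln_1 in H.
  replace (2 * 0 / (1 - 0 * 0)) with 0 in H by (field). lra.
Qed.

Lemma Lz_bounds z : 0 < z ->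
  / (z + / 2) <= ln (z + 1) - ln z <= (z + / 2) / (z * (z + 1)).
Proof.
  intros Hz. set (u := / (2 * z + 1)).
  assert (Hu : 0 <= u < 1).
  { unfold u; split. left; apply Rinv_0_lt_compat; lra.
    rewrite <- Rinv_1. apply Rinv_lt_contravar; lra. }
  assert (E : ln (z + 1) - ln z = ln (1 + u) - ln (1 - u)).
  { rewrite <- !ln_div'; try lra. f_equal. unfold u. field; lra. }
  rewrite E. split.
  - replace (/ (z + / 2)) with (2 * u) by (unfold u; field; lra). apply Lu_lower; auto.
  - replace ((z + / 2) / (z * (z + 1))) with (2 * u / (1 - u * u)).
    apply Lu_upper; auto. unfold u. field. repeat split; try lra. nra.
Qed.

Definition dd (z : R) : R := (z + / 2) * (ln (z + 1) - ln z) - 1.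

Lemma dd_nonneg z : 0 < z -> 0 <= dd z.
Proof.
  intros Hz. destruct (Lz_bounds z Hz) as [H1 _]. unfold dd.
  apply Rmult_le_compat_l with (r := z + /2) in H1; [|lra].
  rewrite Rinv_r in H1; lra.
Qed.

Lemma dd_upper z : 0 < z -> dd z <= / 4 * (/ z - / (z + 1)).
Proof.
  intros Hz. destruct (Lz_bounds z Hz) as [_ H1]. unfold dd.
  apply Rmult_le_compat_l with (r := z + /2) in H1; [|lra].
  replace (/ 4 * (/ z - / (z + 1))) with ((z + / 2) * ((z + / 2) / (z * (z + 1))) - 1)
    by (field; lra). lra.
Qed.

Lemma dd_decr z y : 0 < z -> z <= y -> dd y <= dd z.
Proof.
  intros Hz Hzy.
  set (f := fun v => - dd v).
  assert (f z <= f y); [|unfold f in *; lra].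
  apply (mono_le f (fun v => - (ln (v + 1) - ln v - (v + / 2) / (v * (v + 1))))); [lra| |].
  - intros c Hc. unfold f, dd. auto_derive; [repeat split; lra|]. field; lra.
  - intros c Hc. destruct (Lz_bounds c) as [_ H]; lra.
Qed.

Lemma rsum_S k f : rsum (S k) f = rsum k f + f k.
Proof. reflexivity. Qed.
Lemma rprod_S k f : rprod (S k) f = rprod k f * f k.
Proof. reflexivity. Qed.

Definition lfact (k : nat) : R := rsum k (fun i => ln (INR (S i))).
Definition la (k : nat) : R := lfact k + INR k - INR k * ln (INR k) - / 2 * ln (INR k).

Lemma la_1 : la 1 = 1.
Proof. unfold la, lfact. simpl. rewrite ln_1. lra. Qed.

Lemma la_step k : (1 <= k)%nat -> la (S k) = la k - dd (INR k).
Proof.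
  intros Hk. unfold la, dd, lfact. rewrite rsum_S, S_INR. ring.
Qed.

Lemma INR_pos1 k : (1 <= k)%nat -> 0 < INR k.
Proof. intros; apply lt_0_INR; lia. Qed.

Lemma la_le1 k : (1 <= k)%nat -> la k <= 1.
Proof.
  induction k; intros Hk; [lia|].
  destruct (Nat.eq_dec k 0) as [->|Hk0]; [rewrite la_1; lra|].
  rewrite la_step by lia. pose proof (dd_nonneg (INR k) (INR_pos1 k ltac:(lia))).
  specialize (IHk ltac:(lia)). lra.
Qed.

Lemma la_lower k : (1 <= k)%nat -> 1 - / 4 * (1 - / INR k) <= la k.
Proof.
  induction k; intros Hk; [lia|].
  destruct (Nat.eq_dec k 0) as [->|Hk0]; [rewrite la_1; simpl; rewrite Rinv_1; lra|].
  rewrite la_step by lia. pose proof (dd_upper (INR k) (INR_pos1 k ltac:(lia))).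
  specialize (IHk ltac:(lia)). rewrite S_INR. lra.
Qed.

Lemma la_ge k : (1 <= k)%nat -> 3 / 4 <= la k.
Proof.
  intros Hk. pose proof (la_lower k Hk). assert (0 < / INR k) by (apply Rinv_0_lt_compat, INR_pos1; auto).
  lra.
Qed.

Definition cw (k : nat) : R := rprod k (fun i => (2 * INR i + 1) / (2 * INR i + 2)).

Lemma cw_pos k : 0 < cw k.
Proof.
  induction k; unfold cw in *; [simpl; lra|]. rewrite rprod_S. apply Rmult_lt_0_compat; auto.
  pose proof (pos_INR k). apply Rdiv_lt_0_compat; lra.
Qed.

Lemma ln_cw k : ln (cw k) = lfact (2 * k) - 2 * lfact k - 2 * INR k * ln 2.
Proof.
  induction k.
  - unfold cw, lfact; simpl. rewrite ln_1. ring.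
  - replace (2 * S k)%nat with (S (S (2 * k))) by lia.
    unfold cw. rewrite rprod_S. fold (cw k).
    pose proof (pos_INR k).
    rewrite ln_mult; [|apply cw_pos|apply Rdiv_lt_0_compat; lra].
    rewrite ln_div'; try lra. rewrite IHk. unfold lfact. rewrite !rsum_S.
    rewrite !S_INR, mult_INR. replace (INR 2) with 2 by (simpl; ring).
    replace (2 * INR k + 2) with (2 * (INR k + 1)) by ring.
    rewrite ln_mult; try lra. 
    replace ((1 + 1) * INR k + 1) with (2 * INR k + 1) by ring. replace (2 * INR k + 1 + 1) with (2 * (INR k + 1)) by ring. rewrite ln_mult; try lra. 
Qed.

Definition sst : R := / 2 * ln (2 * PI).

Lemma la_double k : (1 <= k)%nat -> PI <= / (INR k * (cw k * cw k)) ->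
  sst <= 2 * la k - la (2 * k).
Proof.
  intros Hk HW. pose proof (INR_pos1 k Hk) as Hkp. pose proof (cw_pos k) as Hc.
  assert (E : 2 * la k - la (2 * k) = - ln (cw k) - / 2 * ln (INR k) + / 2 * ln 2).
  { rewrite ln_cw. unfold la. rewrite mult_INR. replace (INR 2) with 2 by (simpl; ring).
    rewrite ln_mult; try lra. }
  rewrite E.
  assert (H1 : ln PI <= - ln (INR k) - 2 * ln (cw k)).
  { apply ln_le' in HW; [|apply PI_RGT_0]. rewrite ln_Rinv in HW by (apply Rmult_lt_0_compat; nra).
    rewrite !ln_mult in HW; try nra. }
  unfold sst. rewrite ln_mult; [lra|lra|apply PI_RGT_0].
Qed.

Lemma pow2_ge j : INR j + 1 <= 2 ^ j.
Proof. induction j; [simpl; lra|]. rewrite S_INR. change (2 ^ S j) with (2 * 2 ^ j). pose proof (pos_INR j). lra. Qed.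

Lemma stirling_from_wallis :
  (forall k, (1 <= k)%nat -> PI <= / (INR k * (cw k * cw k))) -> sst <= 1 ->
  forall k, (1 <= k)%nat -> sst <= la k.
Proof.
  intros HW Hs K HK. destruct (Rle_or_lt sst (la K)) as [H|H]; auto. exfalso.
  set (e := la K - sst).
  assert (Hj : forall j, (1 <= 2 ^ j * K)%nat /\ la (2 ^ j * K) - sst <= 2 ^ j * e).
  { induction j.
    - simpl. rewrite Nat.add_0_r. split; auto. unfold e; lra.
    - destruct IHj as [Ha Hb]. replace (2 ^ S j * K)%nat with (2 * (2 ^ j * K))%nat
        by (simpl; lia). split; [lia|].
      pose proof (la_double _ Ha (HW _ Ha)). simpl pow. lra. }
  assert (He : 0 < - e) by (unfold e; lra).
  destruct (INR_archimed (- e) (/ 4) He) as [j Hj2].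
  destruct (Hj j) as [Ha Hb]. pose proof (la_ge _ Ha). pose proof (pow2_ge j).
  assert (2 ^ j * (- e) >= INR j * (- e)) by nra. nra.
Qed.

Lemma INR2 : INR 2 = 2. Proof. simpl; ring. Qed.
Lemma INR1 : INR 1 = 1. Proof. reflexivity. Qed.

Definition Iw (n : nat) : R := RInt (fun t => sin t ^ n) 0 (PI / 2).

Lemma cont_sinpow n x : continuous (fun t => sin t ^ n) x.
Proof. apply (ex_derive_continuous (K:=R_AbsRing) (V:=R_NormedModule)). auto_derive. auto. Qed.

Lemma ex_sinpow n : ex_RInt (fun t => sin t ^ n) 0 (PI / 2).
Proof. apply (ex_RInt_continuous (V:=R_CompleteNormedModule)). intros; apply cont_sinpow. Qed.

Lemma Iw_0 : Iw 0 = PI / 2.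
Proof. unfold Iw. simpl. rewrite RInt_const. unfold scal; simpl. unfold mult; simpl. ring. Qed.

Lemma Iw_1 : Iw 1 = 1.
Proof.
  unfold Iw. apply is_RInt_unique.
  replace 1 with (minus ((fun t => - cos t) (PI/2)) ((fun t => - cos t) 0)).
  - apply (is_RInt_derive (V:=R_CompleteNormedModule) (fun t => - cos t)).
    + intros x _. auto_derive; auto. ring.
    + intros; apply cont_sinpow.
  - simpl. rewrite cos_PI2, cos_0. unfold minus, plus, opp; simpl. ring.
Qed.

Lemma Iw_rec n : INR (n + 2) * Iw (n + 2) = INR (n + 1) * Iw n.
Proof.
  set (df := fun t => INR (n + 2) * sin t ^ (n + 2) - INR (n + 1) * sin t ^ n).
  set (F := fun t => - cos t * sin t ^ (S n)).
  assert (H1 : is_RInt df 0 (PI / 2) (minus (F (PI/2)) (F 0))).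
  { apply (is_RInt_derive (V:=R_CompleteNormedModule)).
    + intros x _. unfold df, F. auto_derive; auto.
        change (match n with 0%nat => 1 | S _ => INR n + 1 end) with (INR (S n)). rewrite S_INR, !plus_INR. replace (INR 1) with 1 by reflexivity.
        replace (INR 2) with 2 by (simpl; ring).
        replace (sin x ^ (n + 2)) with (sin x * (sin x * sin x ^ n))
          by (replace (n + 2)%nat with (S (S n)) by lia; simpl; ring).
        pose proof (sin2_cos2 x) as Hsc. unfold Rsqr in Hsc.
        apply Rminus_diag_uniq.
        transitivity ((INR n + 1) * sin x ^ n * (1 - (sin x * sin x + cos x * cos x))).
        * ring.
        * rewrite Hsc. ring.
    + intros x _. unfold df.
        apply (ex_derive_continuous (K:=R_AbsRing) (V:=R_NormedModule)). auto_derive. auto.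
  }
  assert (E : minus (F (PI/2)) (F 0) = 0).
  { unfold F. rewrite cos_PI2, sin_0. unfold minus, plus, opp; simpl. ring. }
  rewrite E in H1.
  assert (H2 : is_RInt df 0 (PI / 2) (INR (n + 2) * Iw (n + 2) - INR (n + 1) * Iw n)).
  { apply (is_RInt_minus (V:=R_CompleteNormedModule)
      (fun t => INR (n + 2) * sin t ^ (n + 2)) (fun t => INR (n + 1) * sin t ^ n));
    apply (is_RInt_scal (V:=R_CompleteNormedModule) (fun t => sin t ^ _));
    apply (RInt_correct (V:=R_CompleteNormedModule)); apply ex_sinpow. }
  apply (is_RInt_unique (V:=R_CompleteNormedModule)) in H1. apply (is_RInt_unique (V:=R_CompleteNormedModule)) in H2. lra.
Qed.

Lemma Iw_decr n : Iw (S n) <= Iw n.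
Proof.
  unfold Iw. apply RInt_le.
  - pose proof PI_RGT_0; lra.
  - apply ex_sinpow.
  - apply ex_sinpow.
  - intros x Hx. pose proof PI_RGT_0.
    assert (0 <= sin x) by (apply sin_ge_0; lra). pose proof (SIN_bound x).
    simpl. pose proof (pow_le (sin x) n H0). nra.
Qed.

Lemma Iw_even k : Iw (2 * k) = PI / 2 * cw k.
Proof.
  induction k.
  - simpl. rewrite Iw_0. unfold cw; simpl. ring.
  - pose proof (Iw_rec (2 * k)) as H.
    replace (2 * k + 2)%nat with (2 * S k)%nat in H by lia.
    unfold cw. rewrite rprod_S. fold (cw k). rewrite IHk in H.
    rewrite mult_INR, plus_INR, mult_INR, S_INR in H. replace (INR 2) with 2 in H by (simpl; ring).
    replace (INR 1) with 1 in H by reflexivity.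
    pose proof (pos_INR k).
    apply (Rmult_eq_reg_l (2 * (INR k + 1))); [|lra].
    replace (2 * (INR k + 1) * Iw (2 * S k)) with ((1+1) * INR (S k) * Iw (2 * S k)) by (rewrite S_INR; ring). rewrite H. field. lra.
Qed.

Lemma Iw_rec' n : (INR n + 2) * Iw (n + 2) = (INR n + 1) * Iw n.
Proof.
  pose proof (Iw_rec n) as H. rewrite !plus_INR in H. simpl (INR 2) in H. simpl (INR 1) in H.
  replace (INR n + 2) with (INR n + (1 + 1)) by ring. exact H.
Qed.

Lemma Iw_odd k : Iw (2 * k + 1) * (INR (2 * k + 1) * cw k) = 1.
Proof.
  induction k.
  - simpl. rewrite Iw_1. unfold cw; simpl. ring.
  - pose proof (Iw_rec' (2 * k + 1)) as H.
    replace (2 * k + 1 + 2)%nat with (2 * S k + 1)%nat in H by lia.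
    assert (E1 : INR (2 * S k + 1) = 2 * INR k + 3)
      by (rewrite plus_INR, mult_INR, (S_INR k), INR2, INR1; ring).
    assert (E2 : INR (2 * k + 1) = 2 * INR k + 1)
      by (rewrite plus_INR, mult_INR, INR2, INR1; ring).
    rewrite E2 in H, IHk. rewrite E1.
    unfold cw. rewrite rprod_S. fold (cw k).
    pose proof (pos_INR k).
    replace (Iw (2 * S k + 1) * ((2 * INR k + 3) * (cw k * ((2 * INR k + 1) / (2 * INR k + 2)))))
      with ((2 * INR k + 1 + 2) * Iw (2 * S k + 1) * (cw k * ((2 * INR k + 1) / (2 * INR k + 2))))
      by ring.
    rewrite H. replace ((2 * INR k + 1 + 1) * Iw (2 * k + 1) * (cw k * ((2 * INR k + 1) / (2 * INR k + 2)))) with (Iw (2 * k + 1) * ((2 * INR k + 1) * cw k)) by (field; lra). exact IHk.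
Qed.

Lemma wallis k : (1 <= k)%nat -> PI <= / (INR k * (cw k * cw k)).
Proof.
  intros Hk. destruct k as [|j]; [lia|].
  pose proof (Iw_decr (2 * j + 1)) as H.
  replace (S (2 * j + 1)) with (2 * S j)%nat in H by lia.
  rewrite Iw_even in H. pose proof (Iw_odd j) as Ho.
  pose proof (cw_pos j). pose proof (cw_pos (S j)). pose proof (pos_INR j).
  assert (Ec : cw (S j) = cw j * ((2 * INR j + 1) / (2 * INR j + 2))).
  { unfold cw. rewrite rprod_S. reflexivity. }
  rewrite plus_INR, mult_INR, INR2, INR1 in Ho.
  assert (Hi : Iw (2 * j + 1) = / ((2 * INR j + 1) * cw j)).
  { apply (Rmult_eq_reg_r ((2 * INR j + 1) * cw j)). rewrite Ho. field. split; lra.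
    apply Rgt_not_eq. apply Rmult_lt_0_compat; lra. }
  rewrite Hi, Ec in H. rewrite S_INR.
  assert (Hd : 0 < (2 * INR j + 1) / (2 * INR j + 2)) by (apply Rdiv_lt_0_compat; lra).
  set (c := cw j) in *. set (a := INR j) in *.
  replace (/ ((2 * a + 1) * c)) with (/ ((2 * a + 2) * (c * ((2 * a + 1) / (2 * a + 2))))) in H
    by (field; repeat split; lra).
  set (c' := c * ((2 * a + 1) / (2 * a + 2))) in *.
  assert (Hc' : 0 < c') by (unfold c'; apply Rmult_lt_0_compat; lra).
  apply Rmult_le_compat_r with (r := 2 * / c') in H.
  2:{ apply Rmult_le_pos; [lra|]. left; apply Rinv_0_lt_compat; lra. }
  replace (PI / 2 * c' * (2 * / c')) with PI in H by (field; lra).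
  rewrite Ec. replace (/ ((a + 1) * (c' * c'))) with (/ ((2 * a + 2) * c') * (2 * / c')) by (field; split; lra).
  exact H.
Qed.

Lemma exp_nat_mult (N : nat) y : exp (INR N * y) = exp y ^ N.
Proof.
  induction N; simpl; [rewrite Rmult_0_l, exp_0; auto|].
  rewrite <- IHN, <- exp_plus. f_equal. destruct N; simpl; ring.
Qed.

Lemma PI_ub : PI <= 256 / 75.
Proof.
  pose proof (wallis 3 ltac:(lia)) as H. unfold cw in H. simpl in H.
  replace (/ ((1 + 1 + 1) * (1 * ((2 * 0 + 1) / (2 * 0 + 2)) * ((2 * 1 + 1) / (2 * 1 + 2)) *
     ((2 * (1 + 1) + 1) / (2 * (1 + 1) + 2)) *
     (1 * ((2 * 0 + 1) / (2 * 0 + 2)) * ((2 * 1 + 1) / (2 * 1 + 2)) *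
      ((2 * (1 + 1) + 1) / (2 * (1 + 1) + 2)))))) with (256/75) in H by field.
  exact H.
Qed.

Lemma sst_le1 : sst <= 1.
Proof.
  unfold sst.
  assert (H : 2 * PI <= exp 2).
  { replace 2 with (INR 32 * (1/16)) at 2 by (simpl; field).
    rewrite exp_nat_mult.
    assert (H1 : (1 + 1/16) ^ 32 <= exp (1/16) ^ 32).
    { apply pow_incr. split; [lra|]. apply exp_ineq1_le. }
    pose proof PI_ub. 
    assert (H2 : 2 * (256/75) <= (1 + 1/16) ^ 32) by (simpl; lra).
    lra. }
  apply ln_le' in H; [|pose proof PI_RGT_0; lra]. rewrite ln_exp in H. lra.
Qed.

Lemma stirling k : (1 <= k)%nat -> sst <= la k.
Proof. apply stirling_from_wallis; [apply wallis|apply sst_le1]. Qed.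

Lemma ln_sqrt2pi : ln (sqrt (2 * PI)) = sst.
Proof.
  pose proof PI_RGT_0. unfold sst.
  assert (0 < sqrt (2 * PI)) by (apply sqrt_lt_R0; lra).
  rewrite <- (sqrt_sqrt (2 * PI)) at 2 by lra. rewrite ln_mult by lra. lra.
Qed.

Lemma rprod_pos k f : (forall i, (i < k)%nat -> 0 < f i) -> 0 < rprod k f.
Proof.
  induction k; intros H; simpl; [lra|]. apply Rmult_lt_0_compat; auto.
Qed.

Lemma ln_rprod k f : (forall i, (i < k)%nat -> 0 < f i) ->
  ln (rprod k f) = rsum k (fun i => ln (f i)).
Proof.
  induction k; intros H; simpl; [apply ln_1|].
  rewrite ln_mult; [rewrite IHk; auto| apply rprod_pos; auto | auto].
Qed.

Lemma ln_fact k : ln (INR (fact k)) = lfact k.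
Proof.
  induction k; unfold lfact in *; [simpl; apply ln_1|]. change (fact (S k)) with (S k * fact k)%nat. rewrite rsum_S.
  rewrite mult_INR. rewrite ln_mult; [rewrite IHk; ring| |].
  - apply lt_0_INR; lia.
  - apply lt_0_INR. pose proof (lt_O_fact k). lia.
Qed.

Definition Lg (x : R) (k : nat) : R :=
  lfact k + x * ln (INR k) - rsum (S k) (fun i => ln (x + INR i)).

Lemma gauss_exp x k : 0 < x -> gauss_seq x k = exp (Lg x k).
Proof.
  intros Hx. unfold gauss_seq, Lg, Rpower.
  rewrite <- (exp_ln (INR (fact k))) by (apply lt_0_INR; apply lt_O_fact).
  rewrite <- (exp_ln (rprod (S k) _)).
  2:{ apply rprod_pos. intros; pose proof (pos_INR i); lra. }
  rewrite ln_fact, ln_rprod by (intros; pose proof (pos_INR i); lra).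
  unfold Rminus. rewrite !exp_plus, exp_Ropp. field. apply Rgt_not_eq, exp_pos.
Qed.

Lemma Lg_step x k : 0 < x -> (1 <= k)%nat ->
  0 <= Lg x (S k) - Lg x k <= x * (x + 1) * (/ INR k - / (INR k + 1)).
Proof.
  intros Hx Hk. pose proof (INR_pos1 k Hk) as Hkp.
  assert (E : Lg x (S k) - Lg x k =
     x * (ln (INR k + 1) - ln (INR k)) - (ln (x + INR k + 1) - ln (INR k + 1))).
  { unfold Lg, lfact. rewrite !rsum_S. rewrite !S_INR. ring_simplify.
    replace (x + (INR k + 1)) with (x + INR k + 1) by ring. ring. }
  rewrite E. destruct (Lz_bounds (INR k) Hkp) as [A1 A2].
  assert (B1 : ln (x + INR k + 1) - ln (INR k + 1) <= x / (INR k + 1)).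
  { rewrite <- ln_div' by lra.
    replace ((x + INR k + 1) / (INR k + 1)) with (1 + x / (INR k + 1)) by (field; lra).
    apply ln_le_sub1. assert (0 < x / (INR k + 1)) by (apply Rdiv_lt_0_compat; lra). lra. }
  assert (B2 : x / (x + INR k + 1) <= ln (x + INR k + 1) - ln (INR k + 1)).
  { assert (H := ln_le_sub1 (- (x / (x + INR k + 1)))).
    replace (1 + - (x / (x + INR k + 1))) with ((INR k + 1) / (x + INR k + 1)) in H
      by (field; lra).
    rewrite ln_div' in H by lra.
    assert (x / (x + INR k + 1) < 1) by (apply Rmult_lt_reg_r with (x + INR k + 1); [lra|];
      unfold Rdiv; rewrite Rmult_assoc, Rinv_l; lra).
    specialize (H ltac:(lra)). lra. }
  assert (C1 : / (INR k + 1) <= ln (INR k + 1) - ln (INR k)).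
  { eapply Rle_trans; [|exact A1]. apply Rinv_le_contravar; lra. }
  assert (C2 : ln (INR k + 1) - ln (INR k) <= / INR k).
  { eapply Rle_trans; [exact A2|].
    apply Rmult_le_reg_r with (INR k * (INR k + 1)); [nra|].
    unfold Rdiv. rewrite Rmult_assoc, Rinv_l by nra. field_simplify; nra. }
  split.
  - apply Rmult_le_compat_l with (r := x) in C1; [|lra].
    replace (x * / (INR k + 1)) with (x / (INR k + 1)) in C1 by reflexivity. lra.
  - apply Rmult_le_compat_l with (r := x) in C2; [|lra].
    assert (x * / INR k - x / (x + INR k + 1) <= x * (x + 1) * (/ INR k - / (INR k + 1))).
    { replace (x * / INR k - x / (x + INR k + 1)) with (x * (x + 1) / (INR k * (x + INR k + 1)))
        by (field; lra).
      replace (x * (x + 1) * (/ INR k - / (INR k + 1))) with (x * (x + 1) / (INR k * (INR k + 1)))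
        by (field; lra).
      apply Rmult_le_compat_l; [nra|]. apply Rinv_le_contravar; nra. }
    lra.
Qed.

Lemma cv_ext (u v : nat -> R) l : (forall k, (1 <= k)%nat -> u k = v k) -> Un_cv v l -> Un_cv u l.
Proof.
  intros He Hv eps Heps. destruct (Hv eps Heps) as [N HN]. exists (S N).
  intros n Hn. rewrite He by lia. apply HN. lia.
Qed.

Lemma cv_shift (u : nat -> R) l : Un_cv (fun k => u (S k)) l -> Un_cv u l.
Proof.
  intros Hv eps Heps. destruct (Hv eps Heps) as [N HN]. exists (S N).
  intros n Hn. destruct n; [lia|]. apply HN. lia.
Qed.

Lemma cv_inv c d : 0 < d -> Un_cv (fun k => c / (INR k + d)) 0.
Proof.
  intros Hd eps Heps. destruct (INR_archimed eps (Rabs c) Heps) as [N HN].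
  exists N. intros n Hn. unfold Rdist. rewrite Rminus_0_r.
  assert (HnN : INR N <= INR n) by (apply le_INR; lia).
  pose proof (pos_INR n).
  unfold Rdiv. rewrite Rabs_mult, Rabs_inv, (Rabs_pos_eq (INR n + d)) by lra.
  apply Rmult_lt_reg_r with (INR n + d); [lra|].
  rewrite Rmult_assoc, Rinv_l by lra. nra.
Qed.

Lemma gauss_cv x : 0 < x -> exists l, 0 < l /\ Un_cv (gauss_seq x) l.
Proof.
  intros Hx.
  set (u := fun k => Lg x (S k)).
  assert (Hg : Un_growing u).
  { intros k. unfold u. destruct (Lg_step x (S k) Hx ltac:(lia)). lra. }
  assert (Hb : forall k, u k + x * (x + 1) * / (INR k + 1) <= u 0%nat + x * (x + 1)).
  { induction k.
    - simpl. rewrite Rplus_0_l, Rinv_1. lra.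
    - unfold u in *. destruct (Lg_step x (S k) Hx ltac:(lia)) as [_ H].
      rewrite !S_INR in *. lra. }
  assert (Hub : has_ub u).
  { exists (u 0%nat + x * (x + 1)). intros y [k ->].
    specialize (Hb k). assert (0 <= x * (x + 1) * / (INR k + 1)).
    { apply Rmult_le_pos; [nra|]. left; apply Rinv_0_lt_compat. pose proof (pos_INR k); lra. }
    lra. }
  destruct (growing_cv u Hg Hub) as [l Hl].
  exists (exp l). split; [apply exp_pos|].
  apply cv_shift.
  assert (He : Un_cv (fun k => exp (u k)) (exp l)).
  { apply continuity_seq; auto. apply derivable_continuous_pt, derivable_pt_exp. }
  eapply cv_ext; [|exact He]. intros k _. unfold u. apply gauss_exp; auto.
Qed.

Lemma Gamma_spec x : 0 < x -> Un_cv (gauss_seq x) (Gamma x) /\ 0 < Gamma x.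
Proof.
  intros Hx. destruct (gauss_cv x Hx) as [l [Hl Hc]].
  assert (HG : Un_cv (gauss_seq x) (Gamma x)).
  { unfold Gamma. apply epsilon_spec. exists l; auto. }
  split; auto. rewrite (UL_sequence _ _ _ HG Hc). auto.
Qed.

Lemma rsum_shift1 x k : 0 < x ->
  rsum (S k) (fun i => ln (x + 1 + INR i)) =
  rsum (S k) (fun i => ln (x + INR i)) + ln (x + INR k + 1) - ln x.
Proof.
  intros Hx. induction k.
  - simpl. rewrite !Rplus_0_r. ring.
  - rewrite rsum_S, IHk. rewrite (rsum_S (S k) (fun i => ln (x + INR i))). rewrite S_INR. 
    replace (x + 1 + (INR k + 1)) with (x + (INR k + 1) + 1) by ring. replace (x + (INR k + 1)) with (x + INR k + 1) by ring. ring.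
Qed.

Lemma Gamma_succ x : 0 < x -> Gamma (x + 1) = x * Gamma x.
Proof.
  intros Hx. destruct (Gamma_spec x Hx) as [H1 _].
  destruct (Gamma_spec (x + 1) ltac:(lra)) as [H2 _].
  assert (Hr : Un_cv (fun k => x * INR k / (x + INR k + 1)) x).
  { assert (Hm := CV_minus (fun _ => x) (fun k => x * (x + 1) / (INR k + (x + 1))) x 0).
    rewrite Rminus_0_r in Hm. eapply cv_ext.
    2:{ apply Hm.
        - intros e He. exists 0%nat. intros. unfold Rdist. rewrite Rminus_diag, Rabs_R0. lra.
        - apply cv_inv. lra. }
    intros k _. simpl. pose proof (pos_INR k). field. lra. }
  pose proof (CV_mult _ _ _ _ H1 Hr) as H3.
  assert (H4 : Un_cv (gauss_seq (x + 1)) (Gamma x * x)).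
  { eapply cv_ext; [|exact H3]. intros k Hk. simpl.
    pose proof (INR_pos1 k Hk).
    rewrite !gauss_exp by lra. unfold Lg. rewrite rsum_shift1 by lra.
    replace (x * INR k / (x + INR k + 1)) with (exp (ln (INR k) + ln x - ln (x + INR k + 1))).
    - rewrite <- exp_plus. f_equal. ring.
    - unfold Rminus. rewrite !exp_plus, exp_Ropp, !exp_ln by lra. field. lra. }
  rewrite (UL_sequence _ _ _ H2 H4). ring.
Qed.

Lemma rprod_fact k : rprod (S k) (fun i => 1 + INR i) = INR (fact (S k)).
Proof.
  induction k.
  - simpl. ring.
  - rewrite rprod_S, IHk. change (fact (S (S k))) with (S (S k) * fact (S k))%nat.
    rewrite mult_INR, (S_INR (S k)). ring.
Qed.

Lemma Gamma_1 : Gamma 1 = 1.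
Proof.
  destruct (Gamma_spec 1 ltac:(lra)) as [H1 _].
  assert (H2 : Un_cv (gauss_seq 1) 1).
  { assert (Hm := CV_minus (fun _ => 1) (fun k => 1 / (INR k + 1)) 1 0).
    rewrite Rminus_0_r in Hm. eapply cv_ext.
    2:{ apply Hm.
        - intros e He. exists 0%nat. intros. unfold Rdist. rewrite Rminus_diag, Rabs_R0. lra.
        - apply cv_inv. lra. }
    intros k Hk. simpl. pose proof (INR_pos1 k Hk). unfold gauss_seq.
    rewrite rprod_fact, Rpower_1 by lra. change (fact (S k)) with (S k * fact k)%nat.
    rewrite mult_INR, S_INR. pose proof (INR_fact_lt_0 k). field. lra. }
  rewrite (UL_sequence _ _ _ H1 H2). lra.
Qed.

Lemma ln_Gamma_nat k : ln (Gamma (INR (S k))) = lfact k.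
Proof.
  induction k.
  - simpl. rewrite Gamma_1. unfold lfact; simpl. apply ln_1.
  - rewrite S_INR, Gamma_succ by (apply lt_0_INR; lia).
    destruct (Gamma_spec (INR (S k))) as [_ Hp]; [apply lt_0_INR; lia|].
    rewrite ln_mult; [|apply lt_0_INR; lia|auto]. rewrite IHk. unfold lfact. rewrite rsum_S. ring.
Qed.

Lemma ln_Gamma_shift b t : 0 < b ->
  ln (Gamma (b + INR t)) = ln (Gamma b) + rsum t (fun i => ln (b + INR i)).
Proof.
  intros Hb. induction t.
  - simpl. rewrite Rplus_0_r. ring.
  - pose proof (pos_INR t). rewrite S_INR. replace (b + (INR t + 1)) with (b + INR t + 1) by ring.
    rewrite Gamma_succ by lra. destruct (Gamma_spec (b + INR t)) as [_ Hp]; [lra|].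
    rewrite ln_mult by lra. rewrite IHt, rsum_S. ring.
Qed.

Lemma rsum_ext k f g : (forall i, (i < k)%nat -> f i = g i) -> rsum k f = rsum k g.
Proof. induction k; intros H; simpl; auto. rewrite IHk, H; auto. Qed.

Lemma rsum_le k f g : (forall i, (i < k)%nat -> f i <= g i) -> rsum k f <= rsum k g.
Proof. induction k; intros H; simpl; [lra|]. specialize (IHk ltac:(auto)). specialize (H k ltac:(lia)). lra. Qed.

Lemma rsum_plus k f g : rsum k (fun i => f i + g i) = rsum k f + rsum k g.
Proof. induction k; simpl; [ring|]. rewrite IHk; ring. Qed.

Lemma rsum_scal k c f : rsum k (fun i => c * f i) = c * rsum k f.
Proof. induction k; simpl; [ring|]. rewrite IHk; ring. Qed.

Lemma rsum_minus k f g : rsum k (fun i => f i - g i) = rsum k f - rsum k g.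
Proof. induction k; simpl; [ring|]. rewrite IHk; ring. Qed.

Lemma rsum_const k c : rsum k (fun _ => c) = c * INR k.
Proof. induction k; [simpl; ring|]. rewrite rsum_S, IHk, S_INR; ring. Qed.

Lemma rsum_shift0 k f : rsum (S k) f = f 0%nat + rsum k (fun i => f (S i)).
Proof. induction k; simpl; [ring|]. simpl in IHk. rewrite IHk. ring. Qed.

Lemma rsum_delta D a (g : nat -> R) :
  rsum D (fun j => if Nat.eqb a j then g j else 0) = if Nat.ltb a D then g a else 0.
Proof.
  induction D; simpl; [destruct (Nat.ltb a 0) eqn:E; auto; apply Nat.ltb_lt in E; lia|].
  rewrite IHD. destruct (Nat.ltb_spec a D), (Nat.eqb_spec a D), (Nat.ltb_spec a (S D));
    subst; try lia; ring.
Qed.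

Lemma count_sum D n x (phi : nat -> R) : (forall t, (t < n)%nat -> (x t < D)%nat) ->
  rsum n (fun t => phi (cnt x t (x t))) = rsum D (fun j => rsum (cnt x n j) phi).
Proof.
  induction n; intros Hx.
  - simpl. clear Hx. induction D; simpl; [reflexivity|rewrite <- IHD; ring].
  - rewrite rsum_S, IHn by auto.
    transitivity (rsum D (fun j => rsum (cnt x n j) phi + (if Nat.eqb (x n) j then phi (cnt x n j) else 0))).
    + rewrite rsum_plus, rsum_delta. destruct (Nat.ltb_spec (x n) D); [ring|specialize (Hx n ltac:(lia)); lia].
    + apply rsum_ext. intros j _. simpl. destruct (Nat.eqb (x n) j).
      * rewrite Nat.add_1_r, rsum_S. ring.
      * rewrite Nat.add_0_r. ring.
Qed.

Lemma msize_rsum D n x :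
  INR (msize D n x) = rsum D (fun j => if Nat.ltb 0 (cnt x n j) then 1 else 0).
Proof.
  unfold msize. induction D; [reflexivity|].
  rewrite seq_S, filter_app, length_app, plus_INR, IHD, rsum_S. simpl.
  destruct (Nat.ltb 0 (cnt x n D)); simpl; ring.
Qed.

Section Main.

Lemma sumA_ext D n x f g : (forall j, (j < D)%nat -> (0 < cnt x n j)%nat -> f j = g j) ->
  sumA D n x f = sumA D n x g.
Proof.
  intros H. unfold sumA. apply rsum_ext. intros i Hi.
  destruct (Nat.ltb_spec 0 (cnt x n i)); auto.
Qed.

Lemma sumA_le D n x f g : (forall j, (j < D)%nat -> (0 < cnt x n j)%nat -> f j <= g j) ->
  sumA D n x f <= sumA D n x g.
Proof.
  intros H. unfold sumA. apply rsum_le. intros i Hi.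
  destruct (Nat.ltb_spec 0 (cnt x n i)); auto; lra.
Qed.

Lemma sumA_plus D n x f g : sumA D n x (fun j => f j + g j) = sumA D n x f + sumA D n x g.
Proof.
  unfold sumA. rewrite <- rsum_plus. apply rsum_ext. intros.
  destruct (Nat.ltb 0 (cnt x n i)); ring.
Qed.

Lemma sumA_minus D n x f g : sumA D n x (fun j => f j - g j) = sumA D n x f - sumA D n x g.
Proof.
  unfold sumA. rewrite <- rsum_minus. apply rsum_ext. intros.
  destruct (Nat.ltb 0 (cnt x n i)); ring.
Qed.

Lemma sumA_scal D n x c f : sumA D n x (fun j => c * f j) = c * sumA D n x f.
Proof.
  unfold sumA. rewrite <- rsum_scal. apply rsum_ext. intros.
  destruct (Nat.ltb 0 (cnt x n i)); ring.
Qed.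

Lemma sumA_const D n x c : sumA D n x (fun _ => c) = c * INR (msize D n x).
Proof.
  unfold sumA. rewrite msize_rsum, <- rsum_scal. apply rsum_ext. intros.
  destruct (Nat.ltb 0 (cnt x n i)); ring.
Qed.

Lemma sumA_cnt D n x : (forall t, (t < n)%nat -> (x t < D)%nat) ->
  sumA D n x (fun j => INR (cnt x n j)) = INR n.
Proof.
  intros Hx. pose proof (count_sum D n x (fun _ => 1) Hx) as H.
  cbv beta in H. rewrite rsum_const in H.
  rewrite (rsum_ext D _ (fun j => INR (cnt x n j))) in H by (intros; rewrite rsum_const; ring).
  unfold sumA. rewrite (rsum_ext D _ (fun j => INR (cnt x n j))). lra.
  intros j _. destruct (Nat.ltb_spec 0 (cnt x n j)); auto. replace (cnt x n j) with 0%nat by lia. reflexivity.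
Qed.

End Main.

Definition psi (beta : R) (c : nat) : R := if Nat.eqb c 0 then ln beta else ln (INR c).

Lemma rsum_psi beta N : rsum N (psi beta) = if Nat.ltb 0 N then ln beta + lfact (N - 1) else 0.
Proof.
  destruct N; [reflexivity|]. rewrite rsum_shift0. simpl. unfold lfact, psi.
  rewrite Nat.sub_0_r. f_equal.
Qed.

Definition LP (beta : R) (n : nat) : R := rsum n (fun t => ln (INR t + beta)).

Lemma lnS D n x w beta : 0 < beta ->
  (forall t, (t < n)%nat -> (x t < D)%nat) -> weights_ok D n x w ->
  0 < Sbeta beta w x n /\
  ln (Sbeta beta w x n) =
  ln beta * INR (msize D n x) + sumA D n x (fun j => lfact (cnt x n j - 1)) - CLw w x n - LP beta n.
Proof.
  intros Hb Hx Hw.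
  assert (Hpos : forall t, (t < n)%nat -> 0 < Scond beta w x t).
  { intros t Ht. pose proof (pos_INR t). unfold Scond.
    destruct (Nat.ltb_spec 0 (cnt x t (x t))).
    - apply Rdiv_lt_0_compat; [apply lt_0_INR; auto|lra].
    - apply Rdiv_lt_0_compat; [|lra]. apply Rmult_lt_0_compat; auto.
      destruct (Hw t ltac:(lia)) as [Hw1 _]. apply Hw1; [apply Hx; auto|lia]. }
  split; [apply rprod_pos; auto|].
  unfold Sbeta. rewrite ln_rprod by auto.
  rewrite (rsum_ext n _ (fun t => psi beta (cnt x t (x t)) -
     (if Nat.eqb (cnt x t (x t)) 0 then ln (/ w t (x t)) else 0) - ln (INR t + beta))).
  2:{ intros t Ht. pose proof (pos_INR t). specialize (Hpos t Ht). unfold Scond, psi in *.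
      destruct (Nat.ltb_spec 0 (cnt x t (x t))), (Nat.eqb_spec (cnt x t (x t)) 0); try lia.
      - rewrite ln_div' by (try (apply lt_0_INR; lia); lra). ring.
      - assert (Hwp : 0 < w t (x t)).
        { destruct (Hw t ltac:(lia)) as [Hw1 _]. apply Hw1; [apply Hx; auto|lia]. }
        rewrite ln_div' by (try apply Rmult_lt_0_compat; lra).
        rewrite ln_mult, ln_Rinv by lra. ring. }
  rewrite !rsum_minus. unfold CLw, LP. rewrite (count_sum D n x (psi beta) Hx).
  rewrite (rsum_ext D _ (fun j => ln beta * (if Nat.ltb 0 (cnt x n j) then 1 else 0) +
      (if Nat.ltb 0 (cnt x n j) then lfact (cnt x n j - 1) else 0))).
  2:{ intros j _. rewrite rsum_psi. destruct (Nat.ltb 0 (cnt x n j)); ring. }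
  rewrite rsum_plus, rsum_scal, <- msize_rsum. unfold sumA. ring.
Qed.

Lemma RS_eq D n x w beta : 0 < beta -> (1 <= n)%nat ->
  (forall t, (t < n)%nat -> (x t < D)%nat) -> weights_ok D n x w ->
  RS D beta w x n = - (INR n * ln (INR n)) + sumA D n x (fun j => INR (cnt x n j) * ln (INR (cnt x n j)))
     - ln (Sbeta beta w x n).
Proof.
  intros Hb Hn Hx Hw. destruct (lnS D n x w beta Hb Hx Hw) as [HS _].
  pose proof (INR_pos1 n Hn) as Hnp.
  assert (Hpn : 0 < INR n ^ n) by (apply pow_lt; auto).
  assert (HP : forall j, (j < D)%nat -> 0 < (if Nat.ltb 0 (cnt x n j) then INR (cnt x n j) ^ cnt x n j else 1)).
  { intros j _. destruct (Nat.ltb_spec 0 (cnt x n j)); [apply pow_lt, lt_0_INR; auto|lra]. }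
  assert (HPA : 0 < prodA D n x (fun j => INR (cnt x n j) ^ cnt x n j)) by (apply rprod_pos; auto).
  unfold RS, redundancy. unfold Rdiv.
  set (PP := prodA D n x (fun j => INR (cnt x n j) ^ cnt x n j)) in *.
  set (SS := Sbeta beta w x n) in *.
  assert (0 < / INR n ^ n) by (apply Rinv_0_lt_compat; auto).
  assert (0 < / SS) by (apply Rinv_0_lt_compat; auto).
  rewrite (ln_mult (/ INR n ^ n * PP) (/ SS)) by (try apply Rmult_lt_0_compat; auto).
  rewrite (ln_mult (/ INR n ^ n) PP), ln_Rinv, ln_Rinv, ln_pow; auto.
  unfold PP.
  unfold prodA. rewrite ln_rprod by auto. unfold sumA.
  rewrite (rsum_ext D (fun i => ln _) (fun j => if Nat.ltb 0 (cnt x n j) then INR (cnt x n j) * ln (INR (cnt x n j)) else 0)).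
  - ring.
  - intros j _. destruct (Nat.ltb_spec 0 (cnt x n j)); [apply ln_pow, lt_0_INR; auto|apply ln_1].
Qed.

Definition gg (z : R) : R := (z - / 2) * ln z - z.

Lemma LP_g beta n : 0 < beta ->
  LP beta n = gg (INR n + beta) - gg beta - rsum n (fun t => dd (beta + INR t)).
Proof.
  intros Hb. unfold LP. induction n.
  - simpl. rewrite Rplus_0_l. ring.
  - rewrite !rsum_S, IHn, S_INR. pose proof (pos_INR n). unfold gg, dd.
    replace (INR n + 1 + beta) with (beta + INR n + 1) by ring.
    replace (INR n + beta) with (beta + INR n) by ring. field.
Qed.

Lemma sum_dd1 n : rsum n (fun t => dd (1 + INR t)) = 1 - la (S n).
Proof.
  induction n.
  - simpl. rewrite la_1. ring.
  - rewrite rsum_S, IHn, (la_step (S n)) by lia. rewrite S_INR. rewrite (Rplus_comm 1 (INR n)). ring.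
Qed.

Lemma perj N : (1 <= N)%nat ->
  INR N * ln (INR N) - lfact (N - 1) = INR N - la N + / 2 * ln (INR N).
Proof.
  intros HN. destruct N as [|M]; [lia|]. rewrite Nat.sub_succ, Nat.sub_0_r.
  unfold la, lfact. rewrite rsum_S. field.
Qed.

Theorem proposition1 (D n : nat) (x : nat -> nat) (w : nat -> nat -> R) (beta : R)
  (Hbeta : 0 < beta) (Hn : (1 <= n)%nat)
  (Hx : forall t, (t < n)%nat -> (x t < D)%nat)
  (Hw : weights_ok D n x w) :
  RS D beta w x n =
    CLw w x n - INR (msize D n x) * ln beta
    + sumA D n x (fun j => ln (INR (cnt x n j) ^ (cnt x n j) / Gamma (INR (cnt x n j))))
    + ln (Gamma (INR n + beta) / (INR n ^ n * Gamma beta))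
  /\ RS D beta w x n <= RSbar D beta w x n
  /\ (1 <= beta ->
      RSbar D beta w x n - (1 - ln (sqrt (2 * PI))) * (INR (msize D n x) + 2)
        <= RS D beta w x n).
Proof.
  pose proof (INR_pos1 n Hn) as Hnp.
  destruct (lnS D n x w beta Hbeta Hx Hw) as [_ HlnS].
  rewrite <- Rplus_comm in HlnS.
  set (m := INR (msize D n x)) in *.
  set (A1 := sumA D n x (fun j => INR (cnt x n j) * ln (INR (cnt x n j)))).
  set (A2 := sumA D n x (fun j => lfact (cnt x n j - 1))) in *.
  set (A3 := sumA D n x (fun j => la (cnt x n j))).
  set (A4 := sumA D n x (fun j => / 2 * ln (INR (cnt x n j)))).
  set (SD := rsum n (fun t => dd (beta + INR t))).
  assert (HRS : RS D beta w x n = - (INR n * ln (INR n)) + A1 - ln (Sbeta beta w x n))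
    by (apply RS_eq; auto).
  assert (E2 : A1 - A2 = INR n - A3 + A4).
  { unfold A1, A2, A3, A4. rewrite <- sumA_minus, <- (sumA_cnt D n x Hx), <- sumA_minus, <- sumA_plus.
    apply sumA_ext. intros j _ Hj. apply perj. lia. }
  assert (E3 : sumA D n x (fun j => / 2 * ln (INR (cnt x n j) / (2 * PI))) = A4 - m * sst).
  { unfold A4, sst, m. rewrite (Rmult_comm (INR _)), <- sumA_const, <- sumA_minus. apply sumA_ext. intros j _ Hj.
    pose proof PI_RGT_0. rewrite ln_div' by (try (apply lt_0_INR; lia); lra). ring. }
  assert (E4 : sumA D n x (fun j => ln (INR (cnt x n j) ^ (cnt x n j) / Gamma (INR (cnt x n j)))) = A1 - A2).
  { unfold A1, A2. rewrite <- sumA_minus. apply sumA_ext. intros j _ Hj.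
    destruct (cnt x n j) as [|M] eqn:E; [lia|].
    destruct (Gamma_spec (INR (S M))) as [_ HG]; [apply lt_0_INR; lia|].
    rewrite ln_div', ln_pow, ln_Gamma_nat; try (apply pow_lt); try (apply lt_0_INR; lia); auto.
    rewrite Nat.sub_succ, Nat.sub_0_r. ring. }
  assert (E5 : ln (Gamma (INR n + beta) / (INR n ^ n * Gamma beta)) = LP beta n - INR n * ln (INR n)).
  { destruct (Gamma_spec beta Hbeta) as [_ HG1].
    destruct (Gamma_spec (INR n + beta)) as [_ HG2]; [lra|].
    assert (0 < INR n ^ n) by (apply pow_lt; auto).
    rewrite ln_div', ln_mult, ln_pow; auto; [|apply Rmult_lt_0_compat; auto].
    rewrite Rplus_comm, ln_Gamma_shift by auto. unfold LP.
    rewrite (rsum_ext n (fun t => ln (INR t + beta)) (fun i => ln (beta + INR i)))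
      by (intros; rewrite Rplus_comm; auto). ring. }
  assert (E6 : LP beta n = gg (INR n + beta) - gg beta - SD) by (apply LP_g; auto).
  assert (E7 : INR n * ln (1 + beta / INR n) = INR n * (ln (INR n + beta) - ln (INR n))).
  { rewrite <- ln_div' by lra. f_equal. f_equal. field. lra. }
  assert (E8 : (beta - / 2) * ln (INR n / beta + 1) = (beta - / 2) * (ln (INR n + beta) - ln beta)).
  { rewrite <- ln_div' by lra. f_equal. f_equal. field. lra. }
  assert (HSD0 : 0 <= SD).
  { unfold SD. rewrite <- (Rmult_0_l (INR n)), <- rsum_const. apply rsum_le.
    intros t _. apply dd_nonneg. pose proof (pos_INR t). lra. }
  assert (Hs1 : sst <= 1) by apply sst_le1.
  assert (HA3lo : m * sst <= A3).
  { unfold A3, m. rewrite Rmult_comm, <- sumA_const. apply sumA_le. intros j _ Hj.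
    apply stirling. lia. }
  assert (HA3hi : A3 <= m).
  { unfold A3, m. rewrite <- (Rmult_1_l (INR (msize D n x))), <- sumA_const. apply sumA_le.
    intros j _ Hj. apply la_le1. lia. }
  assert (Hgg : gg (INR n + beta) - gg beta =
    (INR n + beta - / 2) * ln (INR n + beta) - INR n - (beta - / 2) * ln beta) by (unfold gg; ring).
  rewrite ln_sqrt2pi.
  split; [|split].
  - rewrite HRS, HlnS, E4, E5. lra.
  - unfold RSbar. rewrite HRS, HlnS, E3, E7, E8, ln_sqrt2pi. fold m. nra.
  - intros Hb1.
    assert (HSD1 : SD <= 1 - sst).
    { unfold SD. eapply Rle_trans.
      - apply (rsum_le n _ (fun t => dd (1 + INR t))). intros t _. pose proof (pos_INR t).
        apply dd_decr; lra.
      - rewrite sum_dd1. pose proof (stirling (S n) ltac:(lia)). lra. }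
    unfold RSbar. rewrite HRS, HlnS, E3, E7, E8, ln_sqrt2pi. fold m. nra.
Qed.
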